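(* Let $\mathbb{C}$ be a partial category, $f:A\to B$ a morphism and $V\le B$. Let $m=\mathrm{id}_B{\downarrow}V:V\to B$ and $m'=\mathrm{id}_A{\downarrow}(A{\uparrow}_fV):A{\uparrow}_fV\to A$. Then the square with sides $f{\uparrow}V:A{\uparrow}_fV\to V$, $m$, $m'$ and $f$ commutes, i.e. $(f{\uparrow}V)m=m'f$, and is a pullback diagram.
   Context: Composition is diagrammatic ($fg$ = first $f$ then $g$). A partial category is a category with a partial order $\le$ on objects, a restriction operator assigning to $U\le A$ and $f:A\to B$ a morphism $f{\downarrow}U:U\to B$, and a contraction operator assigning to $V\le B$ and $f:A\to B$ an object $A{\uparrow}_fV\le A$ and a morphism $f{\uparrow}V:A{\uparrow}_fV\to V$, satisfying: (P.1) $f{\downarrow}A=f$; (P.2) $(f{\downarrow}U){\downarrow}V=f{\downarrow}V$ for $V\le U\le A$; (P.3) $(f{\downarrow}U)g=(fg){\downarrow}U$ for $g:B\to C$; (P.4) $A{\uparrow}_fB=A$ and $f{\uparrow}B=f$; (P.4') $A{\uparrow}_{\mathrm{id}_A}U=U$ and $\mathrm{id}_A{\uparrow}U=\mathrm{id}_U$ for $U\le A$; (P.5) for $W\le V\le B$: $(A{\uparrow}_fV){\uparrow}_{f{\uparrow}V}W=A{\uparrow}_fW$ and $(f{\uparrow}V){\uparrow}W=f{\uparrow}W$; (P.6) for $g:B\to C$, $W\le C$: $A{\uparrow}_f(B{\uparrow}_gW)=A{\uparrow}_{fg}W$ and $(f{\uparrow}(B{\uparrow}_gW))(g{\uparrow}W)=(fg){\uparrow}W$;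 (P.7) for $V\le B$: $(A{\uparrow}_fV){\uparrow}_{f{\downarrow}(A{\uparrow}_fV)}V=A{\uparrow}_fV$ and $(f{\downarrow}(A{\uparrow}_fV)){\uparrow}V=f{\uparrow}V$; (P.8) for $g:B\to C$, $V\le B$: $(fg){\downarrow}(A{\uparrow}_fV)=(f{\uparrow}V)(g{\downarrow}V)$. *)

(* Defs.v *)
(* Partial categories, presented single-sorted (arrows-only):
   one type of morphisms with dom/cod, composition total but only
   constrained on composable pairs; restriction/contraction total as
   functions but constrained (typed) only where the paper defines them. *)

Record PartialCategory := {
  Ob : Type;
  Mor : Type;
  dom : Mor -> Ob;
  cod : Mor -> Ob;
  idm : Ob -> Mor;
  (* diagrammatic composition: comp f g = "fg" = first f then g *)
  comp : Mor -> Mor -> Mor;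
  le : Ob -> Ob -> Prop;
  res : Mor -> Ob -> Mor;      (* res f U = f↓U *)
  cobj : Mor -> Ob -> Ob;      (* cobj f V = A↑_f V *)
  cmor : Mor -> Ob -> Mor;     (* cmor f V = f↑V *)

  dom_id : forall A, dom (idm A) = A;
  cod_id : forall A, cod (idm A) = A;
  dom_comp : forall f g, cod f = dom g -> dom (comp f g) = dom f;
  cod_comp : forall f g, cod f = dom g -> cod (comp f g) = cod g;
  id_comp : forall f, comp (idm (dom f)) f = f;
  comp_id : forall f, comp f (idm (cod f)) = f;
  comp_assoc : forall f g h, cod f = dom g -> cod g = dom h ->
    comp (comp f g) h = comp f (comp g h);

  le_refl : forall A, le A A;
  le_trans : forall A B C, le A B -> le B C -> le A C;
  le_antisym : forall A B, le A B -> le B A -> A = B;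

  dom_res : forall f U, le U (dom f) -> dom (res f U) = U;
  cod_res : forall f U, le U (dom f) -> cod (res f U) = cod f;
  cobj_le : forall f V, le V (cod f) -> le (cobj f V) (dom f);
  dom_cmor : forall f V, le V (cod f) -> dom (cmor f V) = cobj f V;
  cod_cmor : forall f V, le V (cod f) -> cod (cmor f V) = V;

  P1 : forall f, res f (dom f) = f;
  P2 : forall f U V, le V U -> le U (dom f) -> res (res f U) V = res f V;
  P3 : forall f g U, le U (dom f) -> cod f = dom g ->
    comp (res f U) g = res (comp f g) U;
  P4_obj : forall f, cobj f (cod f) = dom f;
  P4_mor : forall f, cmor f (cod f) = f;
  P4'_obj : forall A U, le U A -> cobj (idm A) U = U;
  P4'_mor : forall A U, le U A -> cmor (idm A) U = idm U;
  P5_obj : forall f V W, le W V -> le V (cod f) ->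
    cobj (cmor f V) W = cobj f W;
  P5_mor : forall f V W, le W V -> le V (cod f) ->
    cmor (cmor f V) W = cmor f W;
  P6_obj : forall f g W, cod f = dom g -> le W (cod g) ->
    cobj f (cobj g W) = cobj (comp f g) W;
  P6_mor : forall f g W, cod f = dom g -> le W (cod g) ->
    comp (cmor f (cobj g W)) (cmor g W) = cmor (comp f g) W;
  P7_obj : forall f V, le V (cod f) ->
    cobj (res f (cobj f V)) V = cobj f V;
  P7_mor : forall f V, le V (cod f) ->
    cmor (res f (cobj f V)) V = cmor f V;
  P8 : forall f g V, cod f = dom g -> le V (dom g) ->
    res (comp f g) (cobj f V) = comp (cmor f V) (res g V)
}.

Arguments dom {_}. Arguments cod {_}. Arguments idm {_}. Arguments comp {_}.
Arguments le {_}. Arguments res {_}. Arguments cobj {_}. Arguments cmor {_}.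

(* The commutative square
       P --h--> X
       |        |
       k        m
       v        v
       Y --g--> Z
   (h m = k g) is a pullback. *)
Definition is_pullback (C : PartialCategory) (h k m g : Mor C) : Prop :=
  dom h = dom k /\ cod h = dom m /\ cod k = dom g /\ cod m = cod g /\
  comp h m = comp k g /\
  forall x y : Mor C,
    dom x = dom y -> cod x = dom m -> cod y = dom g ->
    comp x m = comp y g ->
    exists! u : Mor C,
      cod u = dom h /\ dom u = dom x /\ comp u h = x /\ comp u k = y.

(* Main.v *)
Require Import Defs.

Lemma res_id_cobj (C : PartialCategory) (A U : Ob C) (h : le U A) :
  cobj (res (idm A) U) U = U.
Proof.
  assert (h' : le U (cod (idm A))) by (rewrite cod_id; exact h).
  pose proof (P7_obj C (idm A) U h') as E.
  rewrite (P4'_obj C A U h) in E. exact E.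
Qed.

Lemma res_id_cmor (C : PartialCategory) (A U : Ob C) (h : le U A) :
  cmor (res (idm A) U) U = idm U.
Proof.
  assert (h' : le U (cod (idm A))) by (rewrite cod_id; exact h).
  pose proof (P7_mor C (idm A) U h') as E.
  rewrite (P4'_obj C A U h), (P4'_mor C A U h) in E. exact E.
Qed.

Theorem lemma10p10 (C : PartialCategory) (f : Mor C) (V : Ob C)
  (hV : le V (cod f)) :
  comp (cmor f V) (res (idm (cod f)) V)
    = comp (res (idm (dom f)) (cobj f V)) f
  /\ is_pullback C (cmor f V) (res (idm (dom f)) (cobj f V))
                   (res (idm (cod f)) V) f.
Proof.
  set (A := dom f). set (B := cod f). set (A' := cobj f V).
  assert (hA' : le A' A) by (apply cobj_le; exact hV).
  assert (hVB : le V (dom (idm B))) by (rewrite dom_id; exact hV).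
  assert (hA'A : le A' (dom (idm A))) by (rewrite dom_id; exact hA').
  assert (Hcomm : comp (cmor f V) (res (idm B) V) = comp (res (idm A) A') f).
  { rewrite <- (P8 C f (idm B) V) by (rewrite ?dom_id; auto).
    rewrite (P3 C (idm A) f A') by (rewrite ?cod_id; auto).
    unfold B, A. rewrite comp_id, id_comp. reflexivity. }
  split; [exact Hcomm|].
  unfold is_pullback.
  assert (dm : dom (res (idm B) V) = V) by (apply dom_res; auto).
  assert (cm : cod (res (idm B) V) = B) by (rewrite cod_res by auto; apply cod_id).
  assert (dm' : dom (res (idm A) A') = A') by (apply dom_res; auto).
  assert (cm' : cod (res (idm A) A') = A) by (rewrite cod_res by auto; apply cod_id).
  rewrite dm, cm, dm', cm'.
  rewrite (dom_cmor C f V hV), (cod_cmor C f V hV).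
  split; [reflexivity|]. split; [reflexivity|]. split; [reflexivity|].
  split; [reflexivity|]. split; [exact Hcomm|].
  intros x y Hd Hx Hy Hxy.
  assert (Ex : cobj y A' = dom x).
  { unfold A'. rewrite (P6_obj C y f V Hy hV), <- Hxy.
    rewrite <- (P6_obj C x (res (idm B) V) V) by (rewrite ?dm, ?cm; auto).
    rewrite (res_id_cobj C B V hV), <- Hx. apply P4_obj. }
  assert (hA'y : le A' (cod y)) by (rewrite Hy; exact hA').
  exists (cmor y A'). split.
  - split; [rewrite cod_cmor; auto|].
    split; [rewrite dom_cmor by auto; exact Ex|].
    split.
    + unfold A'. rewrite (P6_mor C y f V Hy hV), <- Hxy.
      rewrite <- (P6_mor C x (res (idm B) V) V) by (rewrite ?dm, ?cm; auto).
      rewrite (res_id_cobj C B V hV), (res_id_cmor C B V hV).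
      rewrite <- Hx, P4_mor. apply comp_id.
    + assert (hy' : cod y = dom (idm A)) by (rewrite dom_id; exact Hy).
      rewrite <- (P8 C y (idm A) A' hy' hA'A).
      rewrite Ex, Hd. replace (idm A) with (idm (cod y)) by (rewrite Hy; reflexivity). rewrite comp_id. apply P1.
  - intros u' [Hc [Hdu [Hu1 Hu2]]].
    rewrite <- Hu2.
    assert (hA'm : le A' (cod (res (idm A) A'))) by (rewrite cm'; exact hA').
    rewrite <- (P6_mor C u' (res (idm A) A') A') by (rewrite ?dm', ?Hc; auto).
    rewrite (res_id_cobj C A A' hA'), (res_id_cmor C A A' hA').
    replace A' with (cod u') by exact Hc. rewrite P4_mor. apply comp_id.
Qed.
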